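(* Let $L$ be a loss function satisfying axioms (A1), (A2), (A5), (A6), (A7) listed in the context. Then there exists a single real constant $K$ such that for every variable $X$ and every $p\in[0,1]$, $L(X,p)=-K\log p$ and $L(\neg X,p)=-K\log(1-p)$.
   Context: For a finite set $V$ of Boolean variables, a sentence over $V$ is a propositional formula built from variables in $V$; $\mathit{true}$ is the constant true sentence. A loss function $L$ assigns to every $\mathbf p\in[0,1]^V$ and every sentence $\alpha$ with variables in $V$ a value $L(\alpha,\mathbf p)\in\mathbb R\cup\{+\infty\}$; $-\log 0=+\infty$. In $L(X,p)$, $p$ is a vector over $\{X\}$. For disjoint $X,Y$, $[\mathbf p\,\mathbf q]$ is the concatenation of $\mathbf p\in[0,1]^X$, $\mathbf q\in[0,1]^Y$. (A1) Truth: $L(\mathit{true},\mathbf p)=0$ for all $\mathbf p$. (A2) Additive independence: for $\alpha$ over $X$, $\beta$ over $Y$, $X\cap Y=\emptyset$: $L(\alpha\wedge\beta,[\mathbf p\,\mathbf q])=L(\alpha,\mathbf p)+L(\beta,\mathbf q)$. (A5) Label-literal correspondence: for each variable $X$ there are real constants $K_X,K'_X$ with $L(X,p)=-K_X\log p$ and $L(\neg X,p)=-K'_X\log(1-p)$ for all $p\in[0,1]$. (A6) Value symmetry: $L(\alpha,\mathbf p)=L(\bar\alpha,\mathbf 1-\mathbf p)$, where $\bar\alpha$ replaces each variable by its negation and $\mathbf 1-\mathbf p$ is componentwise. (A7) Variable symmetry: for a permutation $\pi$ of the variable set of $\mathbf p$, $L(\alpha,\mathbf p)=L(\pi(\alpha),\pi(\mathbf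 p))$, with $\pi(\alpha)$ the renamed sentence and $\pi(\mathbf p)$ the permuted vector. *)

(* Defs.v *)
From HB Require Import structures.
From mathcomp Require Import all_boot all_order all_algebra.
From mathcomp Require Import fingroup perm finmap.
From mathcomp Require Import reals constructive_ereal exp.

Set Implicit Arguments.
Unset Strict Implicit.
Unset Printing Implicit Defensive.

Import Order.TTheory GRing.Theory Num.Theory.
Local Open Scope ring_scope.
Local Open Scope fset_scope.

Inductive sentence (T : Type) : Type :=
| SVar of T
| STrue
| SFalse
| SNot of sentence T
| SAnd of sentence T & sentence T
| SOr of sentence T & sentence T.
Arguments STrue {T}.
Arguments SFalse {T}.

Fixpoint svars (T : choiceType) (a : sentence T) : {fset T} :=
  match a with
  | SVar x => [fset x]
  | STrue | SFalse => fset0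
  | SNot b => svars b
  | SAnd b c | SOr b c => svars b `|` svars c
  end.

Fixpoint srename (T : Type) (f : T -> T) (a : sentence T) : sentence T :=
  match a with
  | SVar x => SVar (f x)
  | STrue => STrue
  | SFalse => SFalse
  | SNot b => SNot (srename f b)
  | SAnd b c => SAnd (srename f b) (srename f c)
  | SOr b c => SOr (srename f b) (srename f c)
  end.

Fixpoint sbar (T : Type) (a : sentence T) : sentence T :=
  match a with
  | SVar x => SNot (SVar x)
  | STrue => STrue
  | SFalse => SFalse
  | SNot b => SNot (sbar b)
  | SAnd b c => SAnd (sbar b) (sbar c)
  | SOr b c => SOr (sbar b) (sbar c)
  end.

(* A loss function: for every finite variable set V, every vector p indexed
   by V, and every sentence, a value in R ∪ {±oo} (the "no -oo" requirement
   is imposed as a hypothesis of the theorem). Only the values for p in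
   [0,1]^V and sentences with variables in V are meaningful. *)
Definition loss (R : realType) (T : choiceType) :=
  forall V : {fset T}, (V -> R) -> sentence T -> \bar R.

Definition unitvec (R : realType) (T : choiceType) (V : {fset T}) (p : V -> R) :=
  forall v : V, 0 <= p v <= 1.

Definition catv (R : realType) (T : choiceType) (X Y : {fset T})
  (p : X -> R) (q : Y -> R) : (X `|` Y) -> R :=
  fun z => match (insub (val z) : option X) with
           | Some x => p x
           | None => match (insub (val z) : option Y) with
                     | Some y => q y
                     | None => 0
                     end
           end.

Definition onem_vec (R : realType) (T : choiceType) (V : {fset T}) (p : V -> R)
  : V -> R := fun v => 1 - p v.

Definition perm_ext (T : choiceType) (V : {fset T}) (pi : {perm V}) : T -> T :=
  fun t => match (insub t : option V) with
           | Some v => val (pi v)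
           | None => t
           end.

Definition perm_vec (R : realType) (T : choiceType) (V : {fset T}) (pi : {perm V})
  (p : V -> R) : V -> R := fun v => p ((pi^-1)%g v).

Definition self_elt (T : choiceType) (x : T) : [fset x] := [` fset11 x].

Definition mlog (R : realType) (p : R) : \bar R :=
  if p == 0 then +oo%E else (- ln p)%:E.

Definition A1 (R : realType) (T : choiceType) (L : loss R T) :=
  forall (V : {fset T}) (p : V -> R), unitvec p -> L V p STrue = 0%E.

Definition A2 (R : realType) (T : choiceType) (L : loss R T) :=
  forall (X Y : {fset T}) (a b : sentence T) (p : X -> R) (q : Y -> R),
    X `&` Y = fset0 -> fsubset (svars a) X -> fsubset (svars b) Y ->
    unitvec p -> unitvec q ->
    L (X `|` Y) (catv p q) (SAnd a b) = (L X p a + L Y q b)%E.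

Definition A5 (R : realType) (T : choiceType) (L : loss R T) :=
  forall x : T, exists K K' : R, forall p : [fset x] -> R, unitvec p ->
    L [fset x] p (SVar x) = (K%:E * mlog (p (self_elt x)))%E /\
    L [fset x] p (SNot (SVar x)) = (K'%:E * mlog (1 - p (self_elt x)))%E.

Definition A6 (R : realType) (T : choiceType) (L : loss R T) :=
  forall (V : {fset T}) (p : V -> R) (a : sentence T),
    fsubset (svars a) V -> unitvec p ->
    L V p a = L V (onem_vec p) (sbar a).

Definition A7 (R : realType) (T : choiceType) (L : loss R T) :=
  forall (V : {fset T}) (p : V -> R) (a : sentence T) (pi : {perm V}),
    fsubset (svars a) V -> unitvec p ->
    L V p a = L V (perm_vec pi p) (srename (perm_ext pi) a).

Definition no_minfty (R : realType) (T : choiceType) (L : loss R T) :=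
  forall (V : {fset T}) (p : V -> R) (a : sentence T),
    fsubset (svars a) V -> unitvec p -> L V p a != -oo%E.

(* Main.v *)
Require Import Defs.
From HB Require Import structures.
From mathcomp Require Import all_boot all_order all_algebra.
From mathcomp Require Import fingroup perm finmap.
From mathcomp Require Import reals constructive_ereal exp.
From Stdlib Require Import FunctionalExtensionality Classical.
From mathcomp Require Import lra.

Import Order.TTheory GRing.Theory Num.Theory.
Local Open Scope ring_scope.

Section S.
Variables (R : realType) (T : choiceType).

Lemma catv_fun (X Y : {fset T}) (g : T -> R) :
  catv (fun v : X => g (val v)) (fun v : Y => g (val v)) = fun z => g (val z).
Proof.
apply: functional_extensionality => z; rewrite /catv.
case: insubP => [u _ -> //|nX].
case: insubP => [u _ -> //|nY].
by have := fsvalP z; rewrite inE (negbTE nX) (negbTE nY).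
Qed.

Lemma transp (L : loss R T) (V1 V2 : {fset T}) (g : T -> R) a :
  V1 = V2 -> L V1 (fun v => g (val v)) a = L V2 (fun v => g (val v)) a.
Proof. by move=> ->. Qed.

Lemma unit_g (V : {fset T}) (g : T -> R) :
  (forall t, 0 <= g t <= 1) -> unitvec (fun v : V => g (val v)).
Proof. by move=> H v. Qed.

Arguments unit_g {V g}.
Arguments transp {L V1 V2 g a}.

Definition c : R := - ln (1/2 : R).

Lemma c_neq0 : c != 0.
Proof.
rewrite /c oppr_eq0 lt_eqF // ln_lt0 //.
by apply/andP; split; lra.
Qed.

Lemma mlog_half : mlog (1/2 : R) = c%:E.
Proof. by rewrite /mlog ifF // mul1r invr_eq0 pnatr_eq0. Qed.

Lemma mlog_one : mlog (1 : R) = 0%E.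
Proof. by rewrite /mlog oner_eq0 ln1 oppr0. Qed.


Lemma K_eq (L : loss R T) (hA2 : A2 L) (hA7 : A7 L) (x y : T) (Kx Kx' Ky Ky' : R)
  (Hx : forall p : [fset x]%fset -> R, unitvec p ->
    L [fset x]%fset p (SVar x) = (Kx%:E * mlog (p (self_elt x)))%E /\
    L [fset x]%fset p (SNot (SVar x)) = (Kx'%:E * mlog (1 - p (self_elt x)))%E)
  (Hy : forall p : [fset y]%fset -> R, unitvec p ->
    L [fset y]%fset p (SVar y) = (Ky%:E * mlog (p (self_elt y)))%E /\
    L [fset y]%fset p (SNot (SVar y)) = (Ky'%:E * mlog (1 - p (self_elt y)))%E) :
  Kx = Ky.
Proof.
pose h := fun _ : T => 1/2 : R.
have uh : forall t : T, 0 <= h t <= 1.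
  by move=> t; rewrite /h; apply/andP; split; lra.
case: (eqVneq x y) => [exy|nxy].
  subst y.
  have [h1 _] := Hx _ (unit_g uh).
  have [h2 _] := Hy _ (unit_g uh).
  rewrite h1 /= mlog_half in h2.
  move: h2 => /eqP; rewrite eqe => /eqP.
  exact: (mulIf c_neq0).
pose g := fun t : T => if t == x then 1/2 else 1 : R.
pose g' := fun t : T => if t == y then 1/2 else 1 : R.
have ug : forall t, 0 <= g t <= 1.
  by move=> t; rewrite /g; case: ifP => _; apply/andP; split; lra.
have ug' : forall t, 0 <= g' t <= 1.
  by move=> t; rewrite /g'; case: ifP => _; apply/andP; split; lra.
have disj : ([fset x] `&` [fset y] = fset0)%fset by rewrite fsetI1 inE eq_sym (negbTE nxy).
have disj' : ([fset y] `&` [fset x] = fset0)%fset by rewrite fsetI1 inE (negbTE nxy).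
have H1 := hA2 _ _ (SVar x) (SVar y) (fun v => g (val v)) (fun v => g (val v)) disj (fsubset_refl _)
  (fsubset_refl _) (unit_g ug) (unit_g ug).
rewrite catv_fun in H1.
have xW : x \in ([fset x] `|` [fset y])%fset by rewrite !inE eqxx.
have yW : y \in ([fset x] `|` [fset y])%fset by rewrite !inE eqxx orbT.
pose pi : {perm (([fset x] `|` [fset y])%fset)} := tperm [`xW]%fset [`yW]%fset.
have H2 := hA7 _ (fun v => g (val v)) (SAnd (SVar x) (SVar y)) pi (fsubset_refl _)
  (unit_g ug).
have pv : perm_vec pi (fun v => g (val v)) = fun v => g' (val v).
  apply: functional_extensionality => v; rewrite /perm_vec tpermV.
  case: tpermP => [->|->|vx vy] /=.
  - by rewrite /g /g' (negbTE nxy) eq_sym (negbTE nxy).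
  - by rewrite /g /g' !eqxx.
  - have nvx : (val v == x) = false.
      by apply/eqP => hh; apply: vx; apply: val_inj.
    have nvy : (val v == y) = false.
      by apply/eqP => hh; apply: vy; apply: val_inj.
    by rewrite /g /g' nvx nvy.
have px : perm_ext pi x = y.
  rewrite /perm_ext; case: insubP => [u _ ux|]; last by rewrite xW.
  have -> : u = [`xW]%fset by apply: val_inj.
  by rewrite /pi ?tpermL ?tpermR.
have py : perm_ext pi y = x.
  rewrite /perm_ext; case: insubP => [u _ ux|]; last by rewrite yW.
  have -> : u = [`yW]%fset by apply: val_inj.
  by rewrite /pi ?tpermL ?tpermR.
rewrite pv /= px py in H2.
rewrite H2 (transp (fsetUC [fset x]%fset [fset y]%fset)) -catv_fun in H1.
rewrite (hA2 _ _ (SVar y) (SVar x) (fun v => g' (val v)) (fun v => g' (val v)) disj' (fsubset_refl _)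
  (fsubset_refl _) (unit_g ug') (unit_g ug')) in H1.
have e1 : L [fset x]%fset (fun v => g (val v)) (SVar x) = (Kx * c)%:E.
  by rewrite (Hx _ (unit_g ug)).1 /g /= eqxx mlog_half.
have e2 : L [fset y]%fset (fun v => g (val v)) (SVar y) = 0%E.
  by rewrite (Hy _ (unit_g ug)).1 /g /= eq_sym (negbTE nxy) mlog_one mule0.
have e3 : L [fset y]%fset (fun v => g' (val v)) (SVar y) = (Ky * c)%:E.
  by rewrite (Hy _ (unit_g ug')).1 /g' /= eqxx mlog_half.
have e4 : L [fset x]%fset (fun v => g' (val v)) (SVar x) = 0%E.
  by rewrite (Hx _ (unit_g ug')).1 /g' /= (negbTE nxy) mlog_one mule0.
rewrite e1 e2 e3 e4 !adde0 in H1.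
move: H1 => /eqP; rewrite eqe => /eqP.
by move/(mulIf c_neq0).
Qed.


Lemma K_K' (L : loss R T) (hA6 : A6 L) (x : T) (Kx Kx' : R)
  (Hx : forall p : [fset x]%fset -> R, unitvec p ->
    L [fset x]%fset p (SVar x) = (Kx%:E * mlog (p (self_elt x)))%E /\
    L [fset x]%fset p (SNot (SVar x)) = (Kx'%:E * mlog (1 - p (self_elt x)))%E) :
  Kx = Kx'.
Proof.
pose h := fun _ : T => 1/2 : R.
have uh : forall t : T, 0 <= h t <= 1.
  by move=> t; rewrite /h; apply/andP; split; lra.
have H := hA6 _ (fun v => h (val v)) (SVar x) (fsubset_refl _) (unit_g uh).
have uo : unitvec (onem_vec (fun v : [fset x]%fset => h (val v))).
  by move=> v; rewrite /onem_vec /h; apply/andP; split; lra.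
rewrite /= (Hx _ (unit_g uh)).1 (Hx _ uo).2 /onem_vec /h /= in H.
have e : (1 - (1 - 1/2) : R) = 1/2 by lra.
rewrite e mlog_half in H.
move: H => /eqP; rewrite eqe => /eqP.
exact: (mulIf c_neq0).
Qed.

End S.

Theorem lemma2 (R : realType) (T : choiceType) (L : loss R T) :
  no_minfty L -> A1 L -> A2 L -> A5 L -> A6 L -> A7 L ->
  exists K : R, forall (x : T) (p : [fset x]%fset -> R), unitvec p ->
    L [fset x]%fset p (SVar x) = (K%:E * mlog (p (self_elt x)))%E /\
    L [fset x]%fset p (SNot (SVar x)) = (K%:E * mlog (1 - p (self_elt x)))%E.
Proof.
move=> _ _ hA2 hA5 hA6 hA7.
case: (classic (exists x : T, True)) => [[x0 _]|nT]; last first.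
  by exists 0 => x; exfalso; apply: nT; exists x.
have [K0 [K0' H0]] := hA5 x0.
exists K0 => x p up.
have [Kx [Kx' Hx]] := hA5 x.
have e1 := @K_eq R T L hA2 hA7 x x0 Kx Kx' K0 K0' Hx H0.
have e2 := @K_K' R T L hA6 x Kx Kx' Hx.
have [a b] := Hx p up.
by split; [rewrite a e1 | rewrite b -e2 e1].
Qed.
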